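(* Let $P,Q$ be finite rooted posets that are Boolean sums of stack-depth at most $1$. If $(P,c,x)$ and $(Q,c',y)$ are $n$-generated models on them (rooted at their roots) which are $2$-bisimilar, then they are isomorphic.
   Context: The depth of a point $x$ in a finite poset is the largest $m$ with a chain $x=x_1<\dots<x_m$. A finite rooted poset is a Boolean sum if (1) whenever $y$ is an immediate successor of $x$ then $d(x)=d(y)+1$, and (2) each point of depth $k+1$ lies below all points of depth $k$. For a Boolean sum, let $c_i$ be the number of points of depth $i$; a $k$-stack is a run of $k$ consecutive depths each containing more than one point; the stack-depth is the largest $k$ for which a $k$-stack exists (0 if none). A model over $n$ is a finite rooted poset with an order-preserving colouring $c$ into subsets of $\{p_1,\dots,p_n\}$; it is $n$-generated if no two distinct points generate bisimilar rooted submodels. $k$-bisimulation: relations $S_k\subseteq\dots\subseteq S_0$ with the roots related by $S_k$, $S_0$ colour-preserving, and for $j<k$ forth and back conditions along $\le$ from $S_{j+1}$ to $S_j$. *)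

(* Defs.v *)
From mathcomp Require Import all_boot.
Set Implicit Arguments. Unset Strict Implicit. Unset Printing Implicit Defensive.

Definition is_poset (T : finType) (le : rel T) : Prop :=
  reflexive le /\ antisymmetric le /\ transitive le.

Definition is_root (T : finType) (le : rel T) (r : T) : Prop :=
  forall z, le r z.

Definition slt (T : finType) (le : rel T) : rel T :=
  fun x y => (x != y) && le x y.

Definition chainb (T : finType) (le : rel T) (x : T) (m : nat) : bool :=
  (0 < m) && [exists t : (m.-1).-tuple T, path (slt le) x t].

(* depth: the largest m with a chain x = x_1 < ... < x_m
   (chains in a finite poset have length <= #|T|) *)
Definition depth (T : finType) (le : rel T) (x : T) : nat :=
  \max_(m < #|T|.+1 | chainb le x m) m.

Definition imm_succ (T : finType) (le : rel T) (x y : T) : Prop :=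
  slt le x y /\ ~ (exists z, slt le x z /\ slt le z y).

Definition boolean_sum (T : finType) (le : rel T) : Prop :=
  (forall x y, imm_succ le x y -> depth le x = (depth le y).+1) /\
  (forall x y, depth le x = (depth le y).+1 -> le x y).

Definition depth_count (T : finType) (le : rel T) (i : nat) : nat :=
  #|[set x : T | depth le x == i]|.

Definition has_stack (T : finType) (le : rel T) (k : nat) : bool :=
  [exists i : 'I_#|T|.+1, [forall j : 'I_k, 1 < depth_count le (i + j)]].

Definition stack_depth (T : finType) (le : rel T) : nat :=
  \max_(k < #|T|.+1 | has_stack le k) k.

(* models over n: order-preserving colouring into subsets of {p_1..p_n} *)
Definition is_model (n : nat) (T : finType) (le : rel T) (c : T -> {set 'I_n}) : Prop :=
  forall x y, le x y -> c x \subset c y.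

(* bisimilarity of the rooted submodels generated by x and y
   (the up-sets of x and y with the restricted order and colouring) *)
Definition gen_bisimilar (n : nat) (T : finType) (le : rel T) (c : T -> {set 'I_n})
  (x y : T) : Prop :=
  exists B : T -> T -> Prop,
    B x y /\
    (forall u v, B u v -> le x u /\ le y v) /\
    (forall u v, B u v -> c u = c v) /\
    (forall u v u', B u v -> le u u' -> exists v', le v v' /\ B u' v') /\
    (forall u v v', B u v -> le v v' -> exists u', le u u' /\ B u' v').

Definition n_generated (n : nat) (T : finType) (le : rel T) (c : T -> {set 'I_n}) : Prop :=
  forall x y, gen_bisimilar le c x y -> x = y.

Definition k_bisimilar (n k : nat)
  (T : finType) (le : rel T) (c : T -> {set 'I_n}) (r : T)
  (T' : finType) (le' : rel T') (c' : T' -> {set 'I_n}) (r' : T') : Prop :=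
  exists S : nat -> T -> T' -> Prop,
    (forall j u v, j < k -> S j.+1 u v -> S j u v) /\
    S k r r' /\
    (forall u v, S 0 u v -> c u = c' v) /\
    (forall j u v u', j < k -> S j.+1 u v -> le u u' ->
        exists v', le' v v' /\ S j u' v') /\
    (forall j u v v', j < k -> S j.+1 u v -> le' v v' ->
        exists u', le u u' /\ S j u' v').

Definition models_iso (n : nat)
  (T : finType) (le : rel T) (c : T -> {set 'I_n})
  (T' : finType) (le' : rel T') (c' : T' -> {set 'I_n}) : Prop :=
  exists f : T -> T', bijective f /\
    (forall u v, le' (f u) (f v) = le u v) /\
    (forall u, c' (f u) = c u).

(* Main.v *)
Require Import Defs.
From mathcomp Require Import all_boot.
Set Implicit Arguments. Unset Strict Implicit. Unset Printing Implicit Defensive.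

Lemma slt_trans (T : finType) (le : rel T) : is_poset le -> transitive (slt le).
Proof.
move=> [r [a t]] y x z /andP[nxy lxy] /andP[nyz lyz]; apply/andP; split; last exact: t lxy lyz.
apply/negP=> /eqP exz; subst z; move/negP: nxy; apply; apply/eqP; apply: a; by rewrite lxy lyz.
Qed.

Lemma slt_irr (T : finType) (le : rel T) : irreflexive (slt le).
Proof. by move=> x; rewrite /slt eqxx. Qed.

Lemma path_size (T : finType) (le : rel T) x t :
  is_poset le -> path (slt le) x t -> (size t).+1 <= #|T|.
Proof.
move=> hp hpath.
have u : uniq (x :: t) by apply: (sorted_uniq (slt_trans hp) (@slt_irr _ le)).
by rewrite -[(size t).+1]/(size (x :: t)) -(card_uniqP u) max_card.
Qed.

Lemma depth_ge (T : finType) (le : rel T) x t :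
  is_poset le -> path (slt le) x t -> (size t).+1 <= depth le x.
Proof.
move=> hp hpath; have hs := path_size hp hpath.
have hc : chainb le x (Ordinal (hs : (size t).+1 < #|T|.+1)).
  rewrite /chainb /=; apply/existsP; by exists (in_tuple t).
by have := @leq_bigmax_cond _ (fun m : 'I_#|T|.+1 => chainb le x m) (fun m : 'I_#|T|.+1 => val m) _ hc.
Qed.

Lemma depth_wit (T : finType) (le : rel T) x :
  exists t, path (slt le) x t /\ (size t).+1 = depth le x.
Proof.
have h1 : 1 < #|T|.+1 by rewrite ltnS; apply/card_gt0P; exists x.
have H1 : chainb le x (Ordinal h1).
  rewrite /chainb /=; apply/existsP; by exists (in_tuple [::]).
rewrite /depth (@bigmax_eq_arg _ _ (fun m : 'I_#|T|.+1 => chainb le x m) (fun m : 'I_#|T|.+1 => val m) H1); case: arg_maxnP => //= i /andP[ip /existsP[t ht]] _.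
exists (val t); split => //; by rewrite size_tuple prednK.
Qed.

Lemma depth_ub (T : finType) (le : rel T) x : is_poset le -> depth le x <= #|T|.
Proof. move=> hp; case: (depth_wit le x) => t [ht <-]; exact: path_size hp ht. Qed.

Lemma depth_lb (T : finType) (le : rel T) x : is_poset le -> 1 <= depth le x.
Proof. move=> hp; exact: (depth_ge (t:=[::]) hp). Qed.

Lemma depth_slt (T : finType) (le : rel T) a b :
  is_poset le -> slt le a b -> depth le b < depth le a.
Proof.
move=> hp hab; case: (depth_wit le b) => t [ht <-].
have : path (slt le) a (b :: t) by rewrite /= hab ht.
by move/(depth_ge hp).
Qed.

Lemma depth_step (T : finType) (le : rel T) a k :
  is_poset le -> depth le a = k.+2 -> exists b, slt le a b /\ depth le b = k.+1.
Proof.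
move=> hp hd; case: (depth_wit le a) => t [ht hs].
case: t ht hs => [|b t'] /=; first by rewrite hd.
move=> /andP[hab ht'] hs; exists b; split => //.
apply/eqP; rewrite eqn_leq -ltnS -hd depth_slt //=.
have := depth_ge hp ht'; by rewrite hd in hs; case: hs => ->.
Qed.

Lemma layer_le (T : finType) (le : rel T) a b :
  is_poset le -> boolean_sum le -> depth le b < depth le a -> le a b.
Proof.
move=> hp [_ hb] hlt.
have [k hk] : exists k, depth le a = (k + depth le b).+1.
  exists (depth le a - (depth le b).+1); rewrite -addnS subnK //.
elim: k a hk {hlt} => [|k IH] a hk; first exact: hb.
have [a' [ha' hd]] := depth_step hp (hk : depth le a = (k + depth le b).+2).
have := IH a' hd; case: hp => [_ [_ ht]]; case/andP: ha' => _ h1; exact: ht.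
Qed.

Lemma le_depth (T : finType) (le : rel T) a b :
  is_poset le -> le a b -> a = b \/ depth le b < depth le a.
Proof.
move=> hp hab; case: (eqVneq a b) => [->|ne]; [by left|right].
by apply: depth_slt => //; rewrite /slt ne.
Qed.

Lemma le_char (T : finType) (le : rel T) a b :
  is_poset le -> boolean_sum le -> le a b = (a == b) || (depth le b < depth le a).
Proof.
move=> hp hb; apply/idP/idP.
  by case/(le_depth hp) => [->|->]; rewrite ?eqxx ?orbT.
case/orP => [/eqP->|h]; [by case: hp | exact: layer_le].
Qed.

Lemma gen_eq (n : nat) (T : finType) (le : rel T) (c : T -> {set 'I_n}) a b :
  is_poset le -> n_generated le c -> c a = c b ->
  (forall w, le a w -> w != a -> le b w) ->
  (forall w, le b w -> w != b -> le a w) -> a = b.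
Proof.
move=> [hr [_ ht]] hg hc h1 h2; apply: hg.
exists (fun u v => (u = a /\ v = b) \/ (u = v /\ le a u /\ le b u)).
split; first by left.
split; first by move=> u v [[-> ->]|[-> [? ?]]]; rewrite ?hr.
split; first by move=> u v [[-> ->]|[-> _]].
split.
  move=> u v u' [[-> ->]|[-> [ha hb]]] hu.
    case: (eqVneq u' a) => [->|ne]; first by exists b; split => //; left.
    exists u'; split; first exact: h1.
    by right; split => //; split => //; apply: h1.
  exists u'; split => //; right; split => //; split; [exact: ht hu|exact: ht hu].
move=> u v v' [[-> ->]|[-> [ha hb]]] hv.
  case: (eqVneq v' b) => [->|ne]; first by exists a; split => //; left.
  exists v'; split; first exact: h2.
  by right; split => //; split => //; apply: h2.
exists v'; split => //; right; split => //; split; [exact: ht hv|exact: ht hv].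
Qed.

Lemma same_layer (n : nat) (T : finType) (le : rel T) (c : T -> {set 'I_n}) a b :
  is_poset le -> boolean_sum le -> n_generated le c ->
  depth le a = depth le b -> c a = c b -> a = b.
Proof.
move=> hp hb hg hd hc; apply: (gen_eq hp hg hc) => w hw ne.
  case/(le_depth hp): hw => [e|h]; first by rewrite e eqxx in ne.
  by apply: layer_le => //; rewrite -hd.
case/(le_depth hp): hw => [e|h]; first by rewrite e eqxx in ne.
by apply: layer_le => //; rewrite hd.
Qed.

Lemma next_single (n : nat) (T : finType) (le : rel T) (c : T -> {set 'I_n}) a b :
  is_poset le -> boolean_sum le -> n_generated le c ->
  depth le a = (depth le b).+1 -> c a = c b ->
  (forall w, depth le w = depth le b -> w = b) -> False.
Proof.
move=> hp hb hg hd hc hs.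
suff e : a = b by move: hd; rewrite e => /eqP; rewrite -{1}(addn0 (depth le b)) -addn1 eqn_add2l.
apply: (gen_eq hp hg hc) => w hw ne.
  case/(le_depth hp): hw => [e|h]; first by rewrite e eqxx in ne.
  rewrite hd ltnS leq_eqVlt in h; case/orP: h => [/eqP e|h].
    by rewrite (hs _ e); case: hp.
  exact: layer_le.
case/(le_depth hp): hw => [e|h]; first by rewrite e eqxx in ne.
by apply: layer_le => //; rewrite hd ltnS ltnW.
Qed.

Lemma sandwich (n : nat) (T : finType) (le : rel T) (c : T -> {set 'I_n}) a b d :
  is_model le c -> le a b -> le b d -> c a = c d -> c b = c a.
Proof.
move=> hm hab hbd hc; apply/eqP; rewrite eqEsubset (hm _ _ hab) andbT.
by rewrite hc; apply: hm.
Qed.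

Lemma Klem (n : nat) (T : finType) (le : rel T) (c : T -> {set 'I_n}) v t :
  is_poset le -> boolean_sum le -> is_model le c -> n_generated le c ->
  le v t -> v != t -> c v = c t ->
  depth le v = (depth le t).+1 /\ exists t', t' != t /\ depth le t' = depth le t.
Proof.
move=> hp hb hm hg hvt ne hc.
have hlt : depth le t < depth le v.
  by case/(le_depth hp): hvt => // e; rewrite e eqxx in ne.
have hd : depth le v = (depth le t).+1.
  apply/eqP; rewrite eqn_leq hlt andbT leqNgt; apply/negP => hgt.
  move: hgt; case E: (depth le v) => [|[|k]] //= hgt.
  have [s [hvs hds]] := depth_step hp E.
  have hst : le s t by apply: layer_le => //; rewrite hds.
  have hvs' : le v s by case/andP: hvs.
  have hcs : c s = c v := sandwich hm hvs' hst hc.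
  apply: (next_single hp hb hg (a:=v) (b:=s)); first by rewrite E hds.
    by rewrite hcs.
  move=> w hw.
  have hvw : le v w by apply: layer_le => //; rewrite E hw hds.
  have hwt : le w t by apply: layer_le => //; rewrite hw hds.
  apply: (same_layer hp hb hg hw).
  by rewrite hcs (sandwich hm hvw hwt hc).
split => //.
case: (boolP [exists t', (t' != t) && (depth le t' == depth le t)]).
  by case/existsP => t' /andP[h1 /eqP h2]; exists t'.
move=> hne; exfalso; apply: (next_single hp hb hg hd hc).
move=> w hw; apply/eqP; apply: contraNT hne => nw; apply/existsP; exists w.
by rewrite nw hw eqxx.
Qed.

Lemma no_stack (T : finType) (le : rel T) a a' b b' :
  is_poset le -> stack_depth le <= 1 ->
  a != a' -> depth le a' = depth le a -> b != b' -> depth le b' = depth le b ->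
  depth le a = (depth le b).+1 -> False.
Proof.
move=> hp hst na ha nb hb hab.
have cnt : forall u u', u != u' -> depth le u' = depth le u -> 1 < depth_count le (depth le u).
  move=> u u' ne hd; rewrite /depth_count.
  apply: leq_trans (_ : #|[set u; u']| <= _); first by rewrite cards2 ne.
  apply: subset_leq_card; apply/subsetP => w; rewrite !inE => /orP[/eqP->|/eqP->].
    by rewrite eqxx. by rewrite hd eqxx.
have hs : has_stack le 2.
  rewrite /has_stack; apply/existsP; exists (inord (depth le b)).
  apply/forallP => j; rewrite inordK ?ltnS ?depth_ub //.
  case: j => [[|[|j]] hj] //=; rewrite ?addn0 ?addn1; first exact: cnt nb hb.
  rewrite -hab; exact: cnt na ha.
have h2 : 2 < #|T|.+1.
  rewrite ltnS; apply: leq_trans (depth_ub a hp); by rewrite hab ltnS depth_lb.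
have := @leq_bigmax_cond _ (fun k : 'I_#|T|.+1 => has_stack le k) (fun k => val k) (Ordinal h2) hs.
move=> h; have := leq_trans h hst; done.
Qed.

Definition Col (n : nat) (T : finType) (le : rel T) (c : T -> {set 'I_n}) (u : T)
  : {set {set 'I_n}} := c @: [set w | le u w].

Lemma col_le (n : nat) (T : finType) (le : rel T) (c : T -> {set 'I_n}) u u' :
  is_poset le -> boolean_sum le -> stack_depth le <= 1 -> is_model le c -> n_generated le c ->
  le u u' = (Col le c u' \subset Col le c u).
Proof.
move=> hp hb hst hm hg.
have htr : transitive le by case: hp => [_ []].
have hrf : reflexive le by case: hp.
apply/idP/idP.
  move=> h; apply/subsetP => X /imsetP [w]; rewrite inE => hw ->.
  by apply: imset_f; rewrite inE; apply: htr hw.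
move=> hsub.
have mem : forall z, le u' z -> exists t, le u t /\ c t = c z.
  move=> z hz; have : c z \in Col le c u by apply: (subsetP hsub); apply: imset_f; rewrite inE.
  by case/imsetP => t; rewrite inE => ht ->; exists t.
case: (ltngtP (depth le u') (depth le u)) => h.
- exact: layer_le.
- exfalso.
  have [t [hut hct]] := mem u' (hrf u').
  have hu't : le u' t.
    apply: layer_le => //; case/(le_depth hp): hut => [<-//|h']; exact: ltn_trans h' h.
  have nt : u' != t.
    apply/eqP => e; subst t; case/(le_depth hp): hut => [e|h']; first by rewrite e ltnn in h.
    by move: (ltn_trans h' h); rewrite ltnn.
  have [hd1 [t1 [nt1 hdt1]]] := Klem hp hb hm hg hu't nt (esym hct).
  have etu : u = t.
    case/(le_depth hp): hut => // h'; move: h; rewrite hd1 ltnS leqNgt h'; done.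
  subst t.
  have hu't1 : le u' t1 by apply: layer_le => //; rewrite hdt1.
  have [s [hus hcs]] := mem t1 hu't1.
  have ns : s != u.
    apply/eqP => e; subst s; move/eqP: nt1; apply; apply: (same_layer hp hb hg hdt1); done.
  have hds : depth le s < depth le u.
    by case/(le_depth hp): hus => // e; rewrite e eqxx in ns.
  have ht1s : le t1 s by apply: layer_le => //; rewrite hdt1.
  have nts : t1 != s by apply/eqP => e; move: hds; rewrite -e hdt1 ltnn.
  have [hd2 [s' [ns' hds']]] := Klem hp hb hm hg ht1s nts (esym hcs).
  apply: (no_stack hp hst (a:=u) (a':=t1) (b:=s) (b':=s')) => //.
    all: try by rewrite eq_sym.
  all: rewrite -?hdt1 //.
- case: (eqVneq u u') => [<-//|nuu'].
  exfalso.
  have [t [hut hct]] := mem u' (hrf u').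
  have ntu : t != u.
    apply/eqP => e; subst t; move/eqP: nuu'; apply; exact: (same_layer hp hb hg (esym h)).
  have hdt : depth le t < depth le u.
    by case/(le_depth hp): hut => // e; rewrite e eqxx in ntu.
  have hu't : le u' t by apply: layer_le => //; rewrite h.
  have nu't : u' != t by apply/eqP => e; move: hdt; rewrite -e h ltnn.
  have [hd1 [t' [nt' hdt']]] := Klem hp hb hm hg hu't nu't (esym hct).
  apply: (no_stack hp hst (a:=u') (a':=u) (b:=t) (b':=t')) => //.
  all: try by rewrite eq_sym.
Qed.

Lemma bisim_col (n : nat)
  (P : finType) (leP : rel P) (c : P -> {set 'I_n}) (x : P)
  (Q : finType) (leQ : rel Q) (c' : Q -> {set 'I_n}) (y : Q) :
  is_root leP x -> is_root leQ y -> k_bisimilar 2 leP c x leQ c' y ->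
  (forall u, exists v, c' v = c u /\ Col leQ c' v = Col leP c u) /\
  (forall v, exists u, c u = c' v /\ Col leP c u = Col leQ c' v).
Proof.
move=> hrx hry [S [hmon [h2 [hc [hf hbk]]]]].
split.
  move=> u; have [v [_ h1]] := hf 1 x y u (erefl : 1 < 2) h2 (hrx u).
  have h0 := hmon 0 u v (erefl : 0 < 2) h1.
  exists v; split; first by rewrite (hc _ _ h0).
  apply/eqP; rewrite eqEsubset; apply/andP; split; apply/subsetP => X /imsetP[w]; rewrite inE => hw ->.
    have [u' [hu' hs]] := hbk 0 u v w (erefl : 0 < 2) h1 hw.
    by rewrite -(hc _ _ hs); apply: imset_f; rewrite inE.
  have [v' [hv' hs]] := hf 0 u v w (erefl : 0 < 2) h1 hw.
  by rewrite (hc _ _ hs); apply: imset_f; rewrite inE.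
move=> v; have [u [_ h1]] := hbk 1 x y v (erefl : 1 < 2) h2 (hry v).
have h0 := hmon 0 u v (erefl : 0 < 2) h1.
exists u; split; first by rewrite (hc _ _ h0).
apply/eqP; rewrite eqEsubset; apply/andP; split; apply/subsetP => X /imsetP[w]; rewrite inE => hw ->.
  have [v' [hv' hs]] := hf 0 u v w (erefl : 0 < 2) h1 hw.
  by rewrite (hc _ _ hs); apply: imset_f; rewrite inE.
have [u' [hu' hs]] := hbk 0 u v w (erefl : 0 < 2) h1 hw.
by rewrite -(hc _ _ hs); apply: imset_f; rewrite inE.
Qed.

Lemma col_inj (n : nat) (T : finType) (le : rel T) (c : T -> {set 'I_n}) u u' :
  is_poset le -> boolean_sum le -> stack_depth le <= 1 -> is_model le c -> n_generated le c ->
  Col le c u = Col le c u' -> u = u'.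
Proof.
move=> hp hb hst hm hg e; case: (hp) => [_ [ha _]]; apply: ha.
by rewrite !(col_le _ _ hp hb hst hm hg) e subxx.
Qed.

Theorem mainTheorem6 (n : nat)
  (P : finType) (leP : rel P) (c : P -> {set 'I_n}) (x : P)
  (Q : finType) (leQ : rel Q) (c' : Q -> {set 'I_n}) (y : Q) :
  is_poset leP -> is_root leP x -> boolean_sum leP -> stack_depth leP <= 1 ->
  is_model leP c -> n_generated leP c ->
  is_poset leQ -> is_root leQ y -> boolean_sum leQ -> stack_depth leQ <= 1 ->
  is_model leQ c' -> n_generated leQ c' ->
  k_bisimilar 2 leP c x leQ c' y ->
  models_iso leP c leQ c'.
Proof.
move=> hpP hrx hbP hsP hmP hgP hpQ hry hbQ hsQ hmQ hgQ hk.
have [fw bw] := bisim_col hrx hry hk.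
pose f u := odflt y [pick v | Col leQ c' v == Col leP c u].
pose g v := odflt x [pick u | Col leP c u == Col leQ c' v].
have fP : forall u, Col leQ c' (f u) = Col leP c u.
  move=> u; rewrite /f; case: pickP => [v /eqP //|H].
  have [v [_ hv]] := fw u; by move: (H v); rewrite hv eqxx.
have gP : forall v, Col leP c (g v) = Col leQ c' v.
  move=> v; rewrite /g; case: pickP => [u /eqP //|H].
  have [u [_ hu]] := bw v; by move: (H u); rewrite hu eqxx.
have injP := col_inj hpP hbP hsP hmP hgP.
have injQ := col_inj hpQ hbQ hsQ hmQ hgQ.
exists f; split; last split.
- exists g => [u|v]; [apply: injP; by rewrite gP fP | apply: injQ; by rewrite fP gP].
- move=> u v; by rewrite (col_le _ _ hpQ hbQ hsQ hmQ hgQ) (col_le _ _ hpP hbP hsP hmP hgP) !fP.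
- move=> u; have [v [hcv hCv]] := fw u.
  by rewrite -(injQ _ _ (etrans hCv (esym (fP u)))).
Qed.
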